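(* Let $M\models\mathrm{AA}$, let $I\subseteq M$ be a proper cut and let $D\subseteq M$ be formula-definable with $I\subseteq D$. Then for every $\epsilon>0$ there exists $a\in M\setminus I$ such that $[0,a]\subseteq D^\epsilon$.
   Context: Structures are complete metric spaces of diameter at most $1$ in the language $L=\{+,\cdot,\wedge,\vee,0,1\}$ (operations $1$-Lipschitz, $d$ the only relation symbol). Affine formulas are built from $1$ and atomic formulas $d(t_1,t_2)$ using $+$, scalar multiplication by reals, $\sup_x$, $\inf_x$. $\mathrm{AA}$ is the set of all closed affine conditions true in every model of first-order Peano arithmetic (formulated in $L$ with lattice operations min/max and discrete metric). $x\le y$ means $x\wedge y=x$; $[0,a]=\{u\in M:u\le a\}$. A cut is a nonempty $I\subseteq M$ with $x\le y\in I\Rightarrow x\in I$ and $x\in I\Rightarrow x+1\in I$; proper means $I\ne M$. A set $D$ is formula-definable if it is closed and $d(x,D)=\phi^M(x)$ for all $x$ for some affine formula $\phi$ with parameters from $M$. $D^\epsilon=\{x\in M: d(x,D)<\epsilon\}$. *)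

(* Defs.v *)
From Stdlib Require Import Reals ClassicalEpsilon.
From Coquelicot Require Import Rbar Lub.
Open Scope R_scope.

Record Lsig := {
  car :> Type;
  dist : car -> car -> R;
  Ladd : car -> car -> car;
  Lmul : car -> car -> car;
  Lmeet : car -> car -> car;
  Ljoin : car -> car -> car;
  Lzero : car;
  Lone : car
}.

Definition lip2 (S : Lsig) (f : S -> S -> S) : Prop :=
  forall x x' y y', dist S (f x y) (f x' y') <= Rmax (dist S x x') (dist S y y').

Record LStructure := {
  Lsig_of :> Lsig;
  d_refl : forall x, dist Lsig_of x x = 0;
  d_sep : forall x y, dist Lsig_of x y = 0 -> x = y;
  d_sym : forall x y, dist Lsig_of x y = dist Lsig_of y x;
  d_tri : forall x y z, dist Lsig_of x z <= dist Lsig_of x y + dist Lsig_of y z;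
  d_diam : forall x y, dist Lsig_of x y <= 1;
  d_complete : forall u : nat -> Lsig_of,
    (forall e, 0 < e -> exists N, forall m n, (N <= m)%nat -> (N <= n)%nat ->
        dist Lsig_of (u m) (u n) < e) ->
    exists x, forall e, 0 < e -> exists N, forall n, (N <= n)%nat ->
        dist Lsig_of (u n) x < e;
  lip_add : lip2 Lsig_of (Ladd Lsig_of);
  lip_mul : lip2 Lsig_of (Lmul Lsig_of);
  lip_meet : lip2 Lsig_of (Lmeet Lsig_of);
  lip_join : lip2 Lsig_of (Ljoin Lsig_of)
}.

Inductive term :=
| tvar : nat -> term
| tzero : term
| tone : term
| tadd : term -> term -> term
| tmul : term -> term -> term
| tmeet : term -> term -> term
| tjoin : term -> term -> term.

Inductive aformula :=
| aone : aformula
| adist : term -> term -> aformula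
| aplus : aformula -> aformula -> aformula
| ascale : R -> aformula -> aformula
| asup : nat -> aformula -> aformula
| ainf : nat -> aformula -> aformula.

Fixpoint tfree (n : nat) (t : term) : Prop :=
  match t with
  | tvar m => n = m
  | tzero | tone => False
  | tadd a b | tmul a b | tmeet a b | tjoin a b => tfree n a \/ tfree n b
  end.

Fixpoint afree (n : nat) (p : aformula) : Prop :=
  match p with
  | aone => False
  | adist a b => tfree n a \/ tfree n b
  | aplus p q => afree n p \/ afree n q
  | ascale _ p => afree n p
  | asup m p | ainf m p => n <> m /\ afree n p
  end.

Definition asentence (p : aformula) : Prop := forall n, ~ afree n p.

Definition upd {A : Type} (s : nat -> A) (n : nat) (x : A) : nat -> A :=
  fun m => if Nat.eqb m n then x else s m.

Fixpoint teval (S : Lsig) (s : nat -> S) (t : term) : S :=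
  match t with
  | tvar m => s m
  | tzero => Lzero S
  | tone => Lone S
  | tadd a b => Ladd S (teval S s a) (teval S s b)
  | tmul a b => Lmul S (teval S s a) (teval S s b)
  | tmeet a b => Lmeet S (teval S s a) (teval S s b)
  | tjoin a b => Ljoin S (teval S s a) (teval S s b)
  end.

Fixpoint aeval (S : Lsig) (s : nat -> S) (p : aformula) : R :=
  match p with
  | aone => 1
  | adist a b => dist S (teval S s a) (teval S s b)
  | aplus p q => aeval S s p + aeval S s q
  | ascale r p => r * aeval S s p
  | asup m p => real (Lub_Rbar (fun r => exists x : S, r = aeval S (upd s m x) p))
  | ainf m p => real (Glb_Rbar (fun r => exists x : S, r = aeval S (upd s m x) p))
  end.

Inductive pterm :=
| pvar : nat -> pterm
| pzero : pterm
| pone : pterm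
| padd : pterm -> pterm -> pterm
| pmul : pterm -> pterm -> pterm.

Inductive pformula :=
| peq : pterm -> pterm -> pformula
| pbot : pformula
| pimp : pformula -> pformula -> pformula
| pall : nat -> pformula -> pformula.

Record PAsig := {
  pcar :> Type;
  pz : pcar;
  po : pcar;
  pa : pcar -> pcar -> pcar;
  pm : pcar -> pcar -> pcar
}.

Fixpoint pteval (N : PAsig) (s : nat -> N) (t : pterm) : N :=
  match t with
  | pvar m => s m
  | pzero => pz N
  | pone => po N
  | padd a b => pa N (pteval N s a) (pteval N s b)
  | pmul a b => pm N (pteval N s a) (pteval N s b)
  end.

Fixpoint psat (N : PAsig) (s : nat -> N) (f : pformula) : Prop :=
  match f with
  | peq a b => pteval N s a = pteval N s b
  | pbot => False
  | pimp f g => psat N s f -> psat N s g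
  | pall m f => forall x : N, psat N (upd s m x) f
  end.

Record PAModel := {
  PA_sig :> PAsig;
  PA1 : forall x, pa PA_sig x (po PA_sig) <> pz PA_sig;
  PA2 : forall x y, pa PA_sig x (po PA_sig) = pa PA_sig y (po PA_sig) -> x = y;
  PA3 : forall x, pa PA_sig x (pz PA_sig) = x;
  PA4 : forall x y, pa PA_sig x (pa PA_sig y (po PA_sig))
                    = pa PA_sig (pa PA_sig x y) (po PA_sig);
  PA5 : forall x, pm PA_sig x (pz PA_sig) = pz PA_sig;
  PA6 : forall x y, pm PA_sig x (pa PA_sig y (po PA_sig))
                    = pa PA_sig (pm PA_sig x y) x;
  PAind : forall (f : pformula) (n : nat) (s : nat -> PA_sig),
    psat PA_sig (upd s n (pz PA_sig)) f ->
    (forall x, psat PA_sig (upd s n x) f ->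
               psat PA_sig (upd s n (pa PA_sig x (po PA_sig))) f) ->
    forall x, psat PA_sig (upd s n x) f
}.

Definition PAle (N : PAModel) (x y : N) : Prop := exists z, pa N x z = y.

Definition PAmin (N : PAModel) (x y : N) : N :=
  if excluded_middle_informative (PAle N x y) then x else y.
Definition PAmax (N : PAModel) (x y : N) : N :=
  if excluded_middle_informative (PAle N x y) then y else x.
Definition discrete_d (N : PAModel) (x y : N) : R :=
  if excluded_middle_informative (x = y) then 0 else 1.

Definition PA_L (N : PAModel) : Lsig := {|
  car := pcar N;
  dist := discrete_d N;
  Ladd := pa N;
  Lmul := pm N;
  Lmeet := PAmin N;
  Ljoin := PAmax N;
  Lzero := pz N;
  Lone := po N
|}.

(* AA: closed affine conditions (phi <= 0, phi a sentence) true in all models of PA.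
   (Conditions phi >= 0 / phi = 0 are expressible as -phi <= 0 etc.) *)
Definition AA (p : aformula) : Prop :=
  asentence p /\ forall (N : PAModel) (s : nat -> PA_L N), aeval (PA_L N) s p <= 0.

Definition models_AA (M : LStructure) : Prop :=
  forall p, AA p -> forall s : nat -> M, aeval M s p <= 0.

Definition Lle (M : LStructure) (x y : M) : Prop := Lmeet M x y = x.

Definition is_cut (M : LStructure) (I : M -> Prop) : Prop :=
  (exists x, I x) /\
  (forall x y, Lle M x y -> I y -> I x) /\
  (forall x, I x -> I (Ladd M x (Lone M))).

Definition proper_cut (M : LStructure) (I : M -> Prop) : Prop :=
  is_cut M I /\ exists x, ~ I x.

Definition dist_set (M : LStructure) (x : M) (D : M -> Prop) : R :=
  real (Glb_Rbar (fun r => exists y, D y /\ r = dist M x y)).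

Definition closed_set (M : LStructure) (D : M -> Prop) : Prop :=
  forall x, (forall e, 0 < e -> exists y, D y /\ dist M x y < e) -> D x.

(* formula-definable: closed, and d(x,D) = phi^M(x) for an affine formula phi
   in free variable 0, other free variables being parameters given by s *)
Definition formula_definable (M : LStructure) (D : M -> Prop) : Prop :=
  closed_set M D /\
  exists (p : aformula) (s : nat -> M),
    forall x, dist_set M x D = aeval M (upd s 0 x) p.

Definition eps_nbhd (M : LStructure) (D : M -> Prop) (e : R) : M -> Prop :=
  fun x => dist_set M x D < e.

(* Main.v *)
Require Import Defs.
From Stdlib Require Import Reals Lra Lia List Classical ClassicalEpsilon FunctionalExtensionality PropExtensionality.
From Coquelicot Require Import Rbar Lub.
Open Scope R_scope.

Lemma lub_ge (E : R -> Prop) y0 b : (forall y, E y -> y <= b) -> E y0 ->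
  y0 <= real (Lub_Rbar E) /\ real (Lub_Rbar E) <= b.
Proof.
  intros Hb Hy. destruct (Lub_Rbar_correct E) as [Hub Hl].
  assert (H1 := Hub y0 Hy).
  assert (H2 : Rbar_le (Lub_Rbar E) b) by (apply Hl; intros y Hy'; simpl; apply Hb; auto).
  destruct (Lub_Rbar E); simpl in *; auto; contradiction.
Qed.

Lemma lub_max (E : R -> Prop) w : E w -> (forall y, E y -> y <= w) -> real (Lub_Rbar E) = w.
Proof.
  intros Hw Hb. rewrite (is_lub_Rbar_unique E (Finite w)); auto.
  split. intros y Hy; simpl; auto.
  intros b Hub. apply Hub; auto.
Qed.

Lemma glb_le (E : R -> Prop) y0 b : (forall y, E y -> b <= y) -> E y0 ->
  b <= real (Glb_Rbar E) /\ real (Glb_Rbar E) <= y0.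
Proof.
  intros Hb Hy. destruct (Glb_Rbar_correct E) as [Hub Hl].
  assert (H1 := Hub y0 Hy).
  assert (H2 : Rbar_le b (Glb_Rbar E)) by (apply Hl; intros y Hy'; simpl; apply Hb; auto).
  destruct (Glb_Rbar E); simpl in *; auto; contradiction.
Qed.

Lemma glb_min (E : R -> Prop) w : E w -> (forall y, E y -> w <= y) -> real (Glb_Rbar E) = w.
Proof.
  intros Hw Hb. rewrite (is_glb_Rbar_unique E (Finite w)); auto.
  split. intros y Hy; simpl; auto.
  intros b Hub. apply Hub; auto.
Qed.

Lemma abs_le_iff x b : Rabs x <= b <-> -b <= x <= b.
Proof. split; intros; split_Rabs; lra. Qed.

Lemma upd_eq {A} (s : nat -> A) n x : upd s n x n = x.
Proof. unfold upd. rewrite Nat.eqb_refl. auto. Qed.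
Lemma upd_neq {A} (s : nat -> A) n x m : m <> n -> upd s n x m = s m.
Proof. intros H. unfold upd. destruct (Nat.eqb_spec m n); congruence. Qed.
Lemma upd_id {A} (s : nat -> A) n : upd s n (s n) = s.
Proof. apply functional_extensionality; intro m. unfold upd. destruct (Nat.eqb_spec m n); congruence. Qed.
Lemma upd_comm {A} (s : nat -> A) n m x y : n <> m -> upd (upd s n x) m y = upd (upd s m y) n x.
Proof. intros H. apply functional_extensionality; intro k. unfold upd.
  destruct (Nat.eqb_spec k m); destruct (Nat.eqb_spec k n); congruence. Qed.
Lemma upd_shadow {A} (s : nat -> A) n x y : upd (upd s n x) n y = upd s n y.
Proof. apply functional_extensionality; intro k. unfold upd. destruct (Nat.eqb_spec k n); congruence. Qed.

Fixpoint tmaxv (t : term) : nat :=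
  match t with
  | tvar m => m
  | tzero | tone => 0%nat
  | tadd a b | tmul a b | tmeet a b | tjoin a b => Nat.max (tmaxv a) (tmaxv b)
  end.

Fixpoint amaxv (q : aformula) : nat :=
  match q with
  | aone => 0%nat
  | adist a b => Nat.max (tmaxv a) (tmaxv b)
  | aplus p q => Nat.max (amaxv p) (amaxv q)
  | ascale _ p => amaxv p
  | asup m p | ainf m p => Nat.max m (amaxv p)
  end.

Lemma teval_agree S t s1 s2 : (forall n, (n <= tmaxv t)%nat -> s1 n = s2 n) ->
  teval S s1 t = teval S s2 t.
Proof.
  induction t; simpl; intros H; try rewrite IHt1; try rewrite IHt2; auto;
    try (intros; apply H; lia).
Qed.

Lemma aeval_agree S q : forall s1 s2, (forall n, (n <= amaxv q)%nat -> s1 n = s2 n) ->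
  aeval S s1 q = aeval S s2 q.
Proof.
  induction q; simpl; intros s1 s2 H; auto.
  - rewrite (teval_agree S t s1 s2), (teval_agree S t0 s1 s2); auto; intros; apply H; lia.
  - rewrite (IHq1 s1 s2), (IHq2 s1 s2); auto; intros; apply H; lia.
  - rewrite (IHq s1 s2); auto.
  - rewrite (Lub_Rbar_eqset _ (fun r => exists x : S, r = aeval S (upd s2 n x) q)); auto.
    intros r; split; intros [x Hx]; exists x; rewrite Hx; apply IHq; intros k Hk;
      unfold upd; destruct (Nat.eqb k n); auto.
    apply H; lia. symmetry; apply H; lia.
  - rewrite (Glb_Rbar_eqset _ (fun r => exists x : S, r = aeval S (upd s2 n x) q)); auto.
    intros r; split; intros [x Hx]; exists x; rewrite Hx; apply IHq; intros k Hk;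
      unfold upd; destruct (Nat.eqb k n); auto.
    apply H; lia. symmetry; apply H; lia.
Qed.

Lemma aeval_fresh S q s n x : (amaxv q < n)%nat -> aeval S (upd s n x) q = aeval S s q.
Proof. intros H; apply aeval_agree; intros k Hk; apply upd_neq; lia. Qed.

Lemma teval_notfree S t s n x : ~ tfree n t -> teval S (upd s n x) t = teval S s t.
Proof.
  induction t; simpl; intros H; try (rewrite IHt1, IHt2; tauto); auto.
  apply upd_neq; auto.
Qed.

Lemma tfree_max n t : tfree n t -> (n <= tmaxv t)%nat.
Proof. induction t; simpl; intros H; try lia; try tauto;
  (destruct H as [H|H]; [apply IHt1 in H; lia|apply IHt2 in H; lia]). Qed.

Lemma afree_max n q : afree n q -> (n <= amaxv q)%nat.
Proof.
  induction q; simpl; intros H; try tauto.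
  - destruct H as [H|H]; apply tfree_max in H; lia.
  - destruct H as [H|H]; [apply IHq1 in H; lia|apply IHq2 in H; lia].
  - auto.
  - destruct H as [_ H]; apply IHq in H; lia.
  - destruct H as [_ H]; apply IHq in H; lia.
Qed.

Definition good (S : Lsig) : Prop :=
  (forall x y, 0 <= Defs.dist S x y <= 1) /\ (forall x y, Defs.dist S x y = Defs.dist S y x) /\
  (forall x, Defs.dist S x x = 0).

Fixpoint bnd (q : aformula) : R :=
  match q with
  | aone => 1
  | adist _ _ => 1
  | aplus p q => bnd p + bnd q
  | ascale c p => Rabs c * bnd p
  | asup _ p | ainf _ p => bnd p
  end.

Lemma aeval_bnd S (G : good S) q : forall s, Rabs (aeval S s q) <= bnd q.
Proof.
  destruct G as [Hd _].
  induction q; simpl; intros s.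
  - rewrite Rabs_R1; lra.
  - specialize (Hd (teval S s t) (teval S s t0)). apply abs_le_iff; lra.
  - specialize (IHq1 s); specialize (IHq2 s). apply abs_le_iff in IHq1, IHq2. apply abs_le_iff; lra.
  - rewrite Rabs_mult. apply Rmult_le_compat_l; auto. apply Rabs_pos.
  - destruct (lub_ge (fun r => exists x : S, r = aeval S (upd s n x) q)
      (aeval S (upd s n (Lzero S)) q) (bnd q)) as [H1 H2].
    + intros y [x ->]. specialize (IHq (upd s n x)). apply abs_le_iff in IHq; lra.
    + eauto.
    + specialize (IHq (upd s n (Lzero S))). apply abs_le_iff in IHq. apply abs_le_iff; lra.
  - destruct (glb_le (fun r => exists x : S, r = aeval S (upd s n x) q)
      (aeval S (upd s n (Lzero S)) q) (- bnd q)) as [H1 H2].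
    + intros y [x ->]. specialize (IHq (upd s n x)). apply abs_le_iff in IHq; lra.
    + eauto.
    + specialize (IHq (upd s n (Lzero S))). apply abs_le_iff in IHq. apply abs_le_iff; lra.
Qed.

Lemma sup_ge S (G : good S) s m q x : aeval S (upd s m x) q <= aeval S s (asup m q).
Proof.
  simpl. apply (lub_ge _ _ (bnd q)); eauto.
  intros y [z ->]. pose proof (aeval_bnd S G q (upd s m z)). apply abs_le_iff in H; lra.
Qed.

Lemma sup_le S (G : good S) s m q c : (forall x, aeval S (upd s m x) q <= c) -> aeval S s (asup m q) <= c.
Proof.
  intros H. simpl.
  destruct (lub_ge (fun r => exists x : S, r = aeval S (upd s m x) q)
      (aeval S (upd s m (Lzero S)) q) c); eauto.
  intros y [z ->]; auto.
Qed.

Lemma inf_le S (G : good S) s m q x : aeval S s (ainf m q) <= aeval S (upd s m x) q.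
Proof.
  simpl. apply (glb_le _ _ (- bnd q)); eauto.
  intros y [z ->]. pose proof (aeval_bnd S G q (upd s m z)). apply abs_le_iff in H; lra.
Qed.

(* substitution via Lipschitz trick *)
Definition Sub (chi : aformula) (Y : nat) (t : term) (L : R) : aformula :=
  ainf Y (aplus chi (ascale L (adist (tvar Y) t))).

Lemma Sub_eval S (G : good S) chi Y t L s :
  ~ tfree Y t ->
  (forall x y, aeval S (upd s Y x) chi <= aeval S (upd s Y y) chi + L * Defs.dist S x y) ->
  aeval S s (Sub chi Y t L) = aeval S (upd s Y (teval S s t)) chi.
Proof.
  intros Ht Hl. destruct G as [Hd [Hs Hr]]. simpl.
  apply glb_min.
  - exists (teval S s t). simpl. rewrite upd_eq, teval_notfree, Hr; auto; lra.
  - intros y [x ->]. simpl. rewrite upd_eq, teval_notfree; auto.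
    specialize (Hl (teval S s t) x). rewrite Hs in Hl. lra.
Qed.

Fixpoint clo (k : nat) (q : aformula) : aformula :=
  match k with O => q | S k => clo k (asup k q) end.

Lemma clo_free k : forall q n, afree n (clo k q) -> (k <= n)%nat /\ afree n q.
Proof.
  induction k; simpl; intros q n H. split; auto; lia.
  apply IHk in H. simpl in H. destruct H as [H1 [H2 H3]]. split; auto; lia.
Qed.

Lemma clo_ge S (G : good S) k : forall q s, aeval S s q <= aeval S s (clo k q).
Proof.
  induction k; simpl; intros q s. lra.
  eapply Rle_trans; [|apply IHk].
  pattern s at 1. rewrite <- (upd_id s k). apply sup_ge; auto.
Qed.

Lemma clo_le0 S (G : good S) k : forall q, (forall s, aeval S s q <= 0) -> forall s, aeval S s (clo k q) <= 0.
Proof.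
  induction k; simpl; intros q H s; auto.
  apply IHk. intros s'. apply sup_le; auto.
Qed.

Lemma good_PA (N : PAModel) : good (PA_L N).
Proof.
  split; [|split]; simpl; unfold discrete_d; intros.
  - destruct (excluded_middle_informative (x = y)); lra.
  - destruct (excluded_middle_informative (x = y)); destruct (excluded_middle_informative (y = x)); congruence.
  - destruct (excluded_middle_informative (x = x)); congruence.
Qed.

Lemma good_M (M : LStructure) : good M.
Proof.
  split; [|split]; intros.
  - split; [|apply d_diam]. pose proof (d_tri M x y x). rewrite d_refl, (d_sym M y x) in H. lra.
  - apply d_sym.
  - apply d_refl.
Qed.

Lemma AA_transfer (M : LStructure) (HM : models_AA M) q :
  (forall (N : PAModel) e, aeval (PA_L N) e q <= 0) -> forall s, aeval M s q <= 0.
Proof.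
  intros H s.
  assert (HA : AA (clo (S (amaxv q)) q)).
  { split.
    - intros n Hn. apply clo_free in Hn. destruct Hn as [H1 H2]. apply afree_max in H2. lia.
    - intros N e. apply clo_le0; auto. apply good_PA. }
  specialize (HM _ HA s). eapply Rle_trans; [|apply HM]. apply clo_ge, good_M.
Qed.

Definition Def (N : PAModel) (R : (nat -> N) -> Prop) : Prop :=
  exists f, forall s, R s <-> psat N s f.

Lemma Def_ext (N : PAModel) (R R' : (nat -> N) -> Prop) : (forall s, R s <-> R' s) -> Def N R -> Def N R'.
Proof. intros H [f Hf]. exists f. intros s. rewrite <- H. auto. Qed.

Lemma Def_const (N : PAModel) (P : Prop) : Def N (fun _ => P).
Proof.
  destruct (classic P) as [H|H].
  - exists (pimp pbot pbot). simpl. tauto.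
  - exists pbot. simpl. tauto.
Qed.

Lemma Def_imp (N : PAModel) R1 R2 : Def N R1 -> Def N R2 -> Def N (fun s => R1 s -> R2 s).
Proof. intros [f1 H1] [f2 H2]. exists (pimp f1 f2). intros s. simpl. rewrite H1, H2. tauto. Qed.

Lemma Def_not (N : PAModel) R1 : Def N R1 -> Def N (fun s => ~ R1 s).
Proof. intros [f1 H1]. exists (pimp f1 pbot). intros s. simpl. rewrite H1. tauto. Qed.

Lemma Def_and (N : PAModel) R1 R2 : Def N R1 -> Def N R2 -> Def N (fun s => R1 s /\ R2 s).
Proof.
  intros H1 H2. apply (Def_ext N (fun s => ~ (R1 s -> ~ R2 s))).
  intros s; tauto. apply Def_not, Def_imp; auto. apply Def_not; auto.
Qed.

Lemma Def_or (N : PAModel) R1 R2 : Def N R1 -> Def N R2 -> Def N (fun s => R1 s \/ R2 s).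
Proof.
  intros H1 H2. apply (Def_ext N (fun s => ~ R1 s -> R2 s)).
  intros s; tauto. apply Def_imp; auto. apply Def_not; auto.
Qed.

Lemma Def_all (N : PAModel) m R : Def N R -> Def N (fun s => forall x, R (upd s m x)).
Proof. intros [f H]. exists (pall m f). intros s. simpl. split; intros H' x; apply H; auto. Qed.

Lemma Def_ex (N : PAModel) m R : Def N R -> Def N (fun s => exists x, R (upd s m x)).
Proof.
  intros H. apply (Def_ext N (fun s => ~ forall x, ~ R (upd s m x))).
  intros s. split. intros H'. apply NNPP. intros H''. apply H'. intros x Hx. apply H''. eauto.
  intros [x Hx] H'. eapply H'; eauto.
  apply Def_not. apply (Def_all N m (fun s => ~ R s)). apply Def_not; auto.
Qed.

Lemma Def_list_ex {A} (N : PAModel) (L : list A) (R : A -> (nat -> N) -> Prop) :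
  (forall a, In a L -> Def N (R a)) -> Def N (fun s => exists a, In a L /\ R a s).
Proof.
  induction L as [|a L IH]; intros H.
  - apply (Def_ext N (fun _ => False)). intros s; split; [tauto|]. intros [a [[] _]].
    apply Def_const.
  - apply (Def_ext N (fun s => R a s \/ exists b, In b L /\ R b s)).
    intros s; split.
    + intros [H1|[b [H1 H2]]]. exists a; simpl; auto. exists b; simpl; auto.
    + intros [b [[->|H1] H2]]; auto. right; eauto.
    + apply Def_or. apply H; simpl; auto. apply IH. intros b Hb; apply H; simpl; auto.
Qed.

Lemma PAind_def (N : PAModel) (R : (nat -> N) -> Prop) n s : Def N R ->
  R (upd s n (pz N)) -> (forall x, R (upd s n x) -> R (upd s n (pa N x (po N)))) ->
  forall x, R (upd s n x).
Proof.
  intros [f Hf] H0 HS x. apply Hf. apply PAind.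
  apply Hf; auto. intros y Hy. apply Hf. apply HS. apply Hf; auto.
Qed.

Definition PAop (N : PAModel) (k : nat) : N -> N -> N :=
  match k with
  | O => pa N | 1%nat => pm N | 2%nat => PAmin N | _ => PAmax N
  end.

Lemma Def_PAle (N : PAModel) y1 y2 : Def N (fun s => PAle N (s y1) (s y2)).
Proof.
  set (z := S (y1 + y2)).
  apply (Def_ext N (fun s => exists x, pa N ((upd s z x) y1) ((upd s z x) z) = (upd s z x) y2)).
  - intros s. unfold PAle. setoid_rewrite upd_eq. setoid_rewrite upd_neq; try lia. tauto.
  - apply (Def_ex N z (fun s => pa N (s y1) (s z) = s y2)). exists (peq (padd (pvar y1) (pvar z)) (pvar y2)). simpl. tauto.
Qed.

Lemma Def_op (N : PAModel) k y y1 y2 : Def N (fun s => s y = PAop N k (s y1) (s y2)).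
Proof.
  destruct k as [|[|[|k]]]; simpl.
  - exists (peq (pvar y) (padd (pvar y1) (pvar y2))). simpl. tauto.
  - exists (peq (pvar y) (pmul (pvar y1) (pvar y2))). simpl. tauto.
  - apply (Def_ext N (fun s => (PAle N (s y1) (s y2) /\ s y = s y1) \/ (~ PAle N (s y1) (s y2) /\ s y = s y2))).
    + intros s. unfold PAmin. destruct (excluded_middle_informative (PAle N (s y1) (s y2))); tauto.
    + apply Def_or; apply Def_and; try apply Def_not; try apply Def_PAle.
      exists (peq (pvar y) (pvar y1)); simpl; tauto.
      exists (peq (pvar y) (pvar y2)); simpl; tauto.
  - apply (Def_ext N (fun s => (PAle N (s y1) (s y2) /\ s y = s y2) \/ (~ PAle N (s y1) (s y2) /\ s y = s y1))).
    + intros s. unfold PAmax. destruct (excluded_middle_informative (PAle N (s y1) (s y2))); tauto.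
    + apply Def_or; apply Def_and; try apply Def_not; try apply Def_PAle.
      exists (peq (pvar y) (pvar y2)); simpl; tauto.
      exists (peq (pvar y) (pvar y1)); simpl; tauto.
Qed.

Lemma Def_graph (N : PAModel) t : forall y, (tmaxv t < y)%nat ->
  Def N (fun s => s y = teval (PA_L N) s t).
Proof.
  assert (Hbin : forall k a b, (forall y, (tmaxv a < y)%nat -> Def N (fun s => s y = teval (PA_L N) s a)) ->
     (forall y, (tmaxv b < y)%nat -> Def N (fun s => s y = teval (PA_L N) s b)) ->
     forall y, (Nat.max (tmaxv a) (tmaxv b) < y)%nat ->
     Def N (fun s => s y = PAop N k (teval (PA_L N) s a) (teval (PA_L N) s b))).
  { intros k a b Ha Hb y Hy.
    set (y1 := S y). set (y2 := S (S y)).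
    apply (Def_ext N (fun s => exists x1, exists x2,
       (upd (upd s y1 x1) y2 x2) y1 = teval (PA_L N) (upd (upd s y1 x1) y2 x2) a /\
       (upd (upd s y1 x1) y2 x2) y2 = teval (PA_L N) (upd (upd s y1 x1) y2 x2) b /\
       (upd (upd s y1 x1) y2 x2) y = PAop N k ((upd (upd s y1 x1) y2 x2) y1) ((upd (upd s y1 x1) y2 x2) y2))).
    - intros s.
      assert (E : forall x1 x2 t', (tmaxv t' < y)%nat -> teval (PA_L N) (upd (upd s y1 x1) y2 x2) t' = teval (PA_L N) s t').
      { intros x1 x2 t' Ht'. apply teval_agree. intros n Hn. rewrite !upd_neq by lia. auto. }
      assert (F1 : forall x1 x2, upd (upd s y1 x1) y2 x2 y1 = x1).
      { intros. rewrite upd_neq by lia. apply upd_eq. }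
      assert (F2 : forall x1 x2, upd (upd s y1 x1) y2 x2 y2 = x2).
      { intros. apply upd_eq. }
      assert (F3 : forall x1 x2, upd (upd s y1 x1) y2 x2 y = s y).
      { intros. rewrite !upd_neq by lia. auto. }
      setoid_rewrite F1. setoid_rewrite F2. setoid_rewrite F3.
      split.
      + intros [x1 [x2 [H1 [H2 H3]]]]. rewrite E in H1, H2 by lia. congruence.
      + intros H. exists (teval (PA_L N) s a), (teval (PA_L N) s b).
        rewrite !E by lia. auto.
    - apply (Def_ex N y1 (fun s => exists x2, upd s y2 x2 y1 = teval (PA_L N) (upd s y2 x2) a /\ upd s y2 x2 y2 = teval (PA_L N) (upd s y2 x2) b /\ upd s y2 x2 y = PAop N k (upd s y2 x2 y1) (upd s y2 x2 y2))).
      apply (Def_ex N y2 (fun s => s y1 = teval (PA_L N) s a /\ s y2 = teval (PA_L N) s b /\ s y = PAop N k (s y1) (s y2))).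
      apply Def_and. apply Ha; lia. apply Def_and. apply Hb; lia. apply Def_op. }
  induction t; simpl; intros y Hy.
  - exists (peq (pvar y) (pvar n)). simpl. tauto.
  - exists (peq (pvar y) pzero). simpl. tauto.
  - exists (peq (pvar y) pone). simpl. tauto.
  - apply (Hbin 0%nat); auto.
  - apply (Hbin 1%nat); auto.
  - apply (Hbin 2%nat); auto.
  - apply (Hbin 3%nat); auto.
Qed.

Lemma Def_teq (N : PAModel) t1 t2 : Def N (fun s => teval (PA_L N) s t1 = teval (PA_L N) s t2).
Proof.
  set (y := S (tmaxv t1 + tmaxv t2)).
  apply (Def_ext N (fun s => exists x, upd s y x y = teval (PA_L N) (upd s y x) t1 /\ upd s y x y = teval (PA_L N) (upd s y x) t2)).
  - intros s. assert (E : forall x t', (tmaxv t' < y)%nat -> teval (PA_L N) (upd s y x) t' = teval (PA_L N) s t').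
    { intros x t' Ht'. apply teval_agree. intros n Hn. rewrite !upd_neq by lia. auto. }
    setoid_rewrite upd_eq. split.
    + intros [x [H1 H2]]. rewrite E in H1, H2 by lia. congruence.
    + intros H. exists (teval (PA_L N) s t1). rewrite !E by lia. auto.
  - apply (Def_ex N y (fun s => s y = teval (PA_L N) s t1 /\ s y = teval (PA_L N) s t2)). apply Def_and; apply Def_graph; lia.
Qed.

Fixpoint vals (q : aformula) : list R :=
  match q with
  | aone => 1 :: nil
  | adist _ _ => 0 :: 1 :: nil
  | aplus p q => flat_map (fun a => map (fun b => a + b) (vals q)) (vals p)
  | ascale c p => map (Rmult c) (vals p)
  | asup _ p | ainf _ p => vals p
  end.

Lemma finite_max (L : list R) : forall (E : R -> Prop), (forall y, E y -> In y L) -> (exists y, E y) ->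
  exists w, E w /\ forall y, E y -> y <= w.
Proof.
  induction L as [|a L IH]; intros E HL [y0 Hy0].
  - destruct (HL _ Hy0).
  - destruct (classic (exists y, E y /\ y <> a)) as [Hc|Hc].
    + destruct (IH (fun y => E y /\ y <> a)) as [w' [[Hw1 Hw2] Hw3]]; auto.
      { intros y [Hy1 Hy2]. destruct (HL _ Hy1); auto. congruence. }
      destruct (classic (E a)) as [Ha|Ha].
      * destruct (Rle_dec a w').
        -- exists w'. split; auto. intros y Hy. destruct (Req_dec y a); [lra|]. apply Hw3; auto.
        -- exists a. split; auto. intros y Hy. destruct (Req_dec y a); [lra|].
           assert (y <= w') by (apply Hw3; auto). lra.
      * exists w'. split; auto. intros y Hy. apply Hw3. split; auto. congruence.
    + exists y0. split; auto. intros y Hy.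
      assert (y = a) by (apply NNPP; intros Hn; apply Hc; eauto).
      assert (y0 = a) by (apply NNPP; intros Hn; apply Hc; eauto). lra.
Qed.

Lemma finite_min (L : list R) : forall (E : R -> Prop), (forall y, E y -> In y L) -> (exists y, E y) ->
  exists w, E w /\ forall y, E y -> w <= y.
Proof.
  intros E HL Hne.
  destruct (finite_max (map Ropp L) (fun y => E (- y))) as [w [Hw1 Hw2]].
  - intros y Hy. apply HL in Hy. replace y with (- - y) by lra. apply in_map; auto.
  - destruct Hne as [y Hy]. exists (- y). rewrite Ropp_involutive; auto.
  - exists (- w). split; auto. intros y Hy. specialize (Hw2 (- y)). rewrite Ropp_involutive in Hw2. specialize (Hw2 Hy). lra.
Qed.

Lemma sup_char (N : PAModel) (s : nat -> PA_L N) m q : (forall s', In (aeval (PA_L N) s' q) (vals q)) ->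
  forall v, aeval (PA_L N) s (asup m q) = v <->
  ((forall x, aeval (PA_L N) (upd s m x) q <= v) /\ exists x, aeval (PA_L N) (upd s m x) q = v).
Proof.
  intros Hv v. simpl. split.
  - intros H. destruct (finite_max (vals q) (fun r => exists x : PA_L N, r = aeval (PA_L N) (upd s m x) q))
      as [w [[x Hx] Hw]].
    + intros y [x ->]; auto.
    + exists (aeval (PA_L N) (upd s m (pz N)) q); eauto.
    + rewrite (lub_max _ w) in H; eauto. subst. split; eauto.
  - intros [H1 [x H2]]. apply lub_max; eauto. intros y [z ->]; auto.
Qed.

Lemma inf_char (N : PAModel) (s : nat -> PA_L N) m q : (forall s', In (aeval (PA_L N) s' q) (vals q)) ->
  forall v, aeval (PA_L N) s (ainf m q) = v <->
  ((forall x, v <= aeval (PA_L N) (upd s m x) q) /\ exists x, aeval (PA_L N) (upd s m x) q = v).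
Proof.
  intros Hv v. simpl. split.
  - intros H. destruct (finite_min (vals q) (fun r => exists x : PA_L N, r = aeval (PA_L N) (upd s m x) q))
      as [w [[x Hx] Hw]].
    + intros y [x ->]; auto.
    + exists (aeval (PA_L N) (upd s m (pz N)) q); eauto.
    + rewrite (glb_min _ w) in H; eauto. subst. split; eauto.
  - intros [H1 [x H2]]. apply glb_min; eauto. intros y [z ->]; auto.
Qed.

Lemma vals_in (N : PAModel) q : forall s, In (aeval (PA_L N) s q) (vals q).
Proof.
  induction q; intros s; simpl.
  - auto.
  - unfold discrete_d. destruct (excluded_middle_informative _); auto.
  - apply in_flat_map. exists (aeval (PA_L N) s q1). split; auto. apply in_map; auto.
  - apply in_map; auto.
  - destruct (proj1 (sup_char N s n q IHq _) eq_refl) as [_ [x Hx]].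
    simpl in Hx. rewrite <- Hx. auto.
  - destruct (proj1 (inf_char N s n q IHq _) eq_refl) as [_ [x Hx]].
    simpl in Hx. rewrite <- Hx. auto.
Qed.

Lemma Def_val (N : PAModel) q : forall v, Def N (fun s => aeval (PA_L N) s q = v).
Proof.
  assert (Hg : forall q, (forall v, Def N (fun s => aeval (PA_L N) s q = v)) ->
     forall g : R -> Prop, Def N (fun s => g (aeval (PA_L N) s q))).
  { intros q0 H g. apply (Def_ext N (fun s => exists w, In w (vals q0) /\ (aeval (PA_L N) s q0 = w /\ g w))).
    - intros s. split. intros [w [_ [-> H2]]]; auto.
      intros H'. exists (aeval (PA_L N) s q0). split; auto. apply vals_in.
    - apply Def_list_ex. intros w _. apply Def_and; auto. apply Def_const. }
  induction q; intros v; simpl.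
  - apply Def_const.
  - apply (Def_ext N (fun s => (teval (PA_L N) s t = teval (PA_L N) s t0 /\ 0 = v) \/
                               (~ teval (PA_L N) s t = teval (PA_L N) s t0 /\ 1 = v))).
    + intros s. simpl. unfold discrete_d. destruct (excluded_middle_informative _) as [He|He]; split; intros Hh.
      destruct Hh as [[_ H1]|[H1 _]]; tauto. left; split; auto.
      destruct Hh as [[H1 _]|[_ H1]]; tauto. right; split; auto.
    + apply Def_or; apply Def_and; try apply Def_not; try apply Def_teq; apply Def_const.
  - apply (Def_ext N (fun s => exists w, In w (vals q1) /\ (aeval (PA_L N) s q1 = w /\ aeval (PA_L N) s q2 = v - w))).
    + intros s. split. intros [w [_ [H1 H2]]]; lra.
      intros H'. exists (aeval (PA_L N) s q1). split; [apply vals_in|]. split; auto; lra.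
    + apply Def_list_ex. intros w _. apply Def_and; auto.
  - match goal with |- Def N (fun s => ?c * _ = v) => apply (Hg q IHq (fun r => c * r = v)) end.
  - apply (Def_ext N (fun s => (forall x, aeval (PA_L N) (upd s n x) q <= v) /\ exists x, aeval (PA_L N) (upd s n x) q = v)).
    + intros s. symmetry. apply (sup_char N s n q (vals_in N q)).
    + apply Def_and. apply (Def_all N n (fun s => aeval (PA_L N) s q <= v)). apply (Hg q IHq (fun r => r <= v)).
      apply (Def_ex N n (fun s => aeval (PA_L N) s q = v)). auto.
  - apply (Def_ext N (fun s => (forall x, v <= aeval (PA_L N) (upd s n x) q) /\ exists x, aeval (PA_L N) (upd s n x) q = v)).
    + intros s. symmetry. apply (inf_char N s n q (vals_in N q)).
    + apply Def_and. apply (Def_all N n (fun s => v <= aeval (PA_L N) s q)). apply (Hg q IHq (fun r => v <= r)).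
      apply (Def_ex N n (fun s => aeval (PA_L N) s q = v)). auto.
Qed.

Lemma Def_g (N : PAModel) q (g : R -> Prop) : Def N (fun s => g (aeval (PA_L N) s q)).
Proof.
  apply (Def_ext N (fun s => exists w, In w (vals q) /\ (aeval (PA_L N) s q = w /\ g w))).
  - intros s. split. intros [w [_ [-> H2]]]; auto.
    intros H'. exists (aeval (PA_L N) s q). split; auto. apply vals_in.
  - apply Def_list_ex. intros w _. apply Def_and. apply Def_val. apply Def_const.
Qed.

Lemma ind0 (N : PAModel) (R : (nat -> N) -> Prop) : Def N R ->
  (forall s, R (upd s 0%nat (pz N))) -> (forall s, R s -> R (upd s 0%nat (pa N (s 0%nat) (po N)))) ->
  forall s, R s.
Proof.
  intros HD H0 HS s. rewrite <- (upd_id s 0%nat). apply PAind_def; auto.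
  intros x Hx. specialize (HS _ Hx). rewrite upd_shadow, upd_eq in HS. auto.
Qed.

Lemma zero_add (N : PAModel) y : pa N (pz N) y = y.
Proof.
  set (R := fun s : nat -> N => pa N (pz N) (s 0%nat) = s 0%nat).
  assert (HR : forall s, R s).
  { apply ind0.
    - exists (peq (padd pzero (pvar 0)) (pvar 0)). unfold R; simpl; tauto.
    - intros s; unfold R; rewrite upd_eq; apply PA3.
    - intros s; unfold R; rewrite upd_eq; intros H. rewrite PA4, H. auto. }
  apply (HR (fun _ => y)).
Qed.

Lemma succ_add (N : PAModel) x y : pa N (pa N x (po N)) y = pa N (pa N x y) (po N).
Proof.
  set (R := fun s : nat -> N => pa N (pa N (s 1%nat) (po N)) (s 0%nat) = pa N (pa N (s 1%nat) (s 0%nat)) (po N)).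
  assert (HR : forall s, R s).
  { apply ind0.
    - exists (peq (padd (padd (pvar 1) pone) (pvar 0)) (padd (padd (pvar 1) (pvar 0)) pone)). unfold R; simpl; tauto.
    - intros s; unfold R; rewrite upd_eq, upd_neq by lia. rewrite !PA3. auto.
    - intros s; unfold R; rewrite upd_eq, upd_neq by lia; intros H. rewrite !PA4, H. auto. }
  apply (HR (upd (fun _ => y) 1%nat x)).
Qed.

Lemma add_assoc (N : PAModel) a b x : pa N (pa N a b) x = pa N a (pa N b x).
Proof.
  set (R := fun s : nat -> N => pa N (pa N (s 1%nat) (s 2%nat)) (s 0%nat) = pa N (s 1%nat) (pa N (s 2%nat) (s 0%nat))).
  assert (HR : forall s, R s).
  { apply ind0.
    - exists (peq (padd (padd (pvar 1) (pvar 2)) (pvar 0)) (padd (pvar 1) (padd (pvar 2) (pvar 0)))). unfold R; simpl; tauto.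
    - intros s; unfold R; rewrite upd_eq, !upd_neq by lia. rewrite !PA3. auto.
    - intros s; unfold R; rewrite upd_eq, !upd_neq by lia; intros H. rewrite !PA4, H. auto. }
  apply (HR (upd (upd (fun _ => x) 1%nat a) 2%nat b)).
Qed.

Lemma zero_or_succ (N : PAModel) x : x = pz N \/ exists y, x = pa N y (po N).
Proof.
  set (R := fun s : nat -> N => s 0%nat = pz N \/ exists y, s 0%nat = pa N y (po N)).
  assert (HR : forall s, R s).
  { apply ind0.
    - apply (Def_ext N (fun s => s 0%nat = pz N \/ exists y, (upd s 3%nat y) 0%nat = pa N ((upd s 3%nat y) 3%nat) (po N))).
      + intros s. unfold R. setoid_rewrite upd_eq. setoid_rewrite upd_neq; try lia. tauto.
      + apply Def_or. exists (peq (pvar 0) pzero). simpl; tauto.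
        apply (Def_ex N 3%nat (fun s => s 0%nat = pa N (s 3%nat) (po N))).
        exists (peq (pvar 0) (padd (pvar 3) pone)). simpl; tauto.
    - intros s; unfold R; rewrite upd_eq. auto.
    - intros s _; unfold R; rewrite upd_eq. eauto. }
  apply (HR (fun _ => x)).
Qed.

Lemma add_succ_neq (N : PAModel) x y : pa N x (pa N y (po N)) <> x.
Proof.
  set (R := fun s : nat -> N => forall y, pa N (s 0%nat) (pa N y (po N)) <> s 0%nat).
  assert (HR : forall s, R s).
  { apply ind0.
    - apply (Def_ext N (fun s => forall y, ~ pa N ((upd s 1%nat y) 0%nat) (pa N ((upd s 1%nat y) 1%nat) (po N)) = (upd s 1%nat y) 0%nat)).
      + intros s. unfold R. setoid_rewrite upd_eq. setoid_rewrite upd_neq; try lia. tauto.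
      + apply (Def_all N 1%nat (fun s => ~ pa N (s 0%nat) (pa N (s 1%nat) (po N)) = s 0%nat)).
        apply Def_not. exists (peq (padd (pvar 0) (padd (pvar 1) pone)) (pvar 0)). simpl; tauto.
    - intros s; unfold R; rewrite upd_eq. intros z H. rewrite PA4 in H. eapply PA1; eauto.
    - intros s IH; unfold R; rewrite upd_eq. intros z H.
      rewrite PA4 in H. apply PA2 in H. rewrite succ_add, <- PA4 in H. eapply IH; eauto. }
  apply (HR (fun _ => x)).
Qed.

Lemma not_le_succ (N : PAModel) b : ~ PAle N (pa N b (po N)) b.
Proof. intros [z H]. rewrite succ_add, <- PA4 in H. eapply add_succ_neq; eauto. Qed.

Lemma le_refl (N : PAModel) a : PAle N a a.
Proof. exists (pz N). apply PA3. Qed.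

Lemma le_trans (N : PAModel) a b c : PAle N a b -> PAle N b c -> PAle N a c.
Proof. intros [z Hz] [w Hw]. exists (pa N z w). rewrite <- add_assoc, Hz. auto. Qed.

Lemma le_total (N : PAModel) x y : PAle N x y \/ PAle N y x.
Proof.
  set (R := fun s : nat -> N => forall y, PAle N (s 0%nat) y \/ PAle N y (s 0%nat)).
  assert (HR : forall s, R s).
  { apply ind0.
    - apply (Def_ext N (fun s => forall y, PAle N ((upd s 1%nat y) 0%nat) ((upd s 1%nat y) 1%nat) \/ PAle N ((upd s 1%nat y) 1%nat) ((upd s 1%nat y) 0%nat))).
      + intros s. unfold R. setoid_rewrite upd_eq. setoid_rewrite upd_neq; try lia. tauto.
      + apply (Def_all N 1%nat (fun s => PAle N (s 0%nat) (s 1%nat) \/ PAle N (s 1%nat) (s 0%nat))).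
        apply Def_or; apply Def_PAle.
    - intros s; unfold R; rewrite upd_eq. intros z. left. exists z. apply zero_add.
    - intros s IH; unfold R; rewrite upd_eq. intros z. destruct (IH z) as [[w Hw]|[w Hw]].
      + destruct (zero_or_succ N w) as [->|[v ->]].
        * right. rewrite PA3 in Hw. subst. exists (po N). auto.
        * left. exists v. rewrite succ_add, <- PA4. auto.
      + right. exists (pa N w (po N)). rewrite PA4, Hw. auto. }
  apply (HR (fun _ => x)).
Qed.

Lemma min_of_le (N : PAModel) a b : PAle N a b -> PAmin N a b = a.
Proof. intros H. unfold PAmin. destruct (excluded_middle_informative _); tauto. Qed.
Lemma min_of_nle (N : PAModel) a b : ~ PAle N a b -> PAmin N a b = b.
Proof. intros H. unfold PAmin. destruct (excluded_middle_informative _); tauto. Qed.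
Lemma le_of_min (N : PAModel) a b : PAmin N a b = a -> PAle N a b.
Proof. unfold PAmin. destruct (excluded_middle_informative _); auto. intros ->. apply le_refl. Qed.
Lemma min_le_r (N : PAModel) u x : PAle N (PAmin N u x) x.
Proof. unfold PAmin. destruct (excluded_middle_informative _); auto. apply le_refl. Qed.
Lemma min_le_l (N : PAModel) u x : PAle N (PAmin N u x) u.
Proof. unfold PAmin. destruct (excluded_middle_informative _); auto. apply le_refl.
  destruct (le_total N u x); tauto. Qed.

Lemma F2N (N : PAModel) u x : PAmin N (PAmin N u x) x = PAmin N u x.
Proof. apply min_of_le, min_le_r. Qed.
Lemma F3N (N : PAModel) u x : PAmin N (PAmin N u x) u = PAmin N u x.
Proof. apply min_of_le, min_le_l. Qed.
Lemma F4N (N : PAModel) z x y : PAmin N z x = z -> PAmin N x y = x -> PAmin N z y = z.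
Proof. intros H1 H2. apply min_of_le. eapply le_trans; apply le_of_min; eauto. Qed.
Lemma F6N (N : PAModel) x : PAmin N (pz N) x = pz N.
Proof. apply min_of_le. exists x. apply zero_add. Qed.

Lemma gap_one (a : R) (L : list R) : exists g, 0 < g /\ forall y, In y L -> y <> a -> g <= Rabs (y - a).
Proof.
  induction L as [|b L IH].
  - exists 1. split. lra. intros y [].
  - destruct IH as [g [Hg H]]. destruct (Req_dec b a) as [->|Hb].
    + exists g. split; auto. intros y [<-|Hy] Hya; [congruence|auto].
    + exists (Rmin g (Rabs (b - a))). split.
      * unfold Rmin; destruct (Rle_dec g (Rabs (b - a))); auto. apply Rabs_pos_lt. lra.
      * intros y [<-|Hy] Hya; unfold Rmin; destruct (Rle_dec g (Rabs (b - a))); try lra.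
        apply H; auto. assert (g <= Rabs (y - a)) by (apply H; auto). lra.
Qed.

Lemma gap_exists (L : list R) : exists g, 0 < g /\ forall x y, In x L -> In y L -> x < y -> g <= y - x.
Proof.
  induction L as [|a L IH].
  - exists 1. split. lra. intros x y [].
  - destruct IH as [g1 [Hg1 H1]]. destruct (gap_one a L) as [g2 [Hg2 H2]].
    exists (Rmin g1 g2). split.
    + unfold Rmin; destruct (Rle_dec g1 g2); auto.
    + assert (Hm1 : Rmin g1 g2 <= g1) by apply Rmin_l. assert (Hm2 : Rmin g1 g2 <= g2) by apply Rmin_r.
      intros x y [Ex|Hx] [Ey|Hy] Hxy.
      * lra.
      * assert (g2 <= Rabs (y - a)) by (apply H2; auto; lra). rewrite Rabs_right in H by lra. lra.
      * assert (g2 <= Rabs (x - a)) by (apply H2; auto; lra). rewrite Rabs_left in H by lra. lra.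
      * assert (g1 <= y - x) by (apply H1; auto). lra.
Qed.

Lemma ev_plus S s p q : aeval S s (aplus p q) = aeval S s p + aeval S s q.
Proof. reflexivity. Qed.
Lemma ev_scale S s c p : aeval S s (ascale c p) = c * aeval S s p.
Proof. reflexivity. Qed.
Lemma ev_dist S s a b : aeval S s (adist a b) = Defs.dist S (teval S s a) (teval S s b).
Proof. reflexivity. Qed.

Lemma dist_PA (N : PAModel) x y : Defs.dist (PA_L N) x y = discrete_d N x y.
Proof. reflexivity. Qed.

Definition vB (psi : aformula) (X : nat) : nat := S (amaxv psi + X).
Definition vV psi X : nat := S (vB psi X).
Definition vA psi X : nat := S (vV psi X).
Definition L2 psi : R := 2 * bnd psi + 1.
Definition chi psi X t := Sub psi X t (L2 psi).
Definition tA psi X := tmeet (tvar (vV psi X)) (tvar (vB psi X)).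
Definition tA' psi X := tmeet (tadd (tA psi X) tone) (tvar (vB psi X)).
Definition incr psi X := aplus (chi psi X (tA' psi X)) (ascale (-1) (chi psi X (tA psi X))).
Definition body psi X C :=
  aplus (aplus (chi psi X (tvar (vB psi X))) (ascale (-1) (chi psi X tzero)))
        (ascale (- C) (asup (vV psi X) (incr psi X))).

Lemma bnd_nonneg q : 0 <= bnd q.
Proof. induction q; simpl; try lra; auto. apply Rmult_le_pos; auto; apply Rabs_pos. Qed.

Lemma lipN (N : PAModel) psi X s x y :
  aeval (PA_L N) (upd s X x) psi <= aeval (PA_L N) (upd s X y) psi + L2 psi * Defs.dist (PA_L N) x y.
Proof.
  change (Defs.dist (PA_L N) x y) with (discrete_d N x y). unfold discrete_d, L2. destruct (excluded_middle_informative _) as [E|H]. rewrite E; lra.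
  pose proof (aeval_bnd _ (good_PA N) psi (upd s X x)). pose proof (aeval_bnd _ (good_PA N) psi (upd s X y)).
  apply abs_le_iff in H0, H1. lra.
Qed.

Definition fN (N : PAModel) psi X (s : nat -> PA_L N) (x : PA_L N) := aeval (PA_L N) (upd s X x) psi.

Lemma fN_fresh (N : PAModel) psi X s m v x : (amaxv psi < m)%nat -> m <> X ->
  fN N psi X (upd s m v) x = fN N psi X s x.
Proof. intros H1 H2. unfold fN. rewrite upd_comm by auto. apply aeval_fresh; auto. Qed.

Lemma chiN (N : PAModel) psi X t s : ~ tfree X t ->
  aeval (PA_L N) s (chi psi X t) = fN N psi X s (teval (PA_L N) s t).
Proof. intros H. apply Sub_eval; auto. apply good_PA. intros; apply lipN. Qed.

Ltac fresh_tac := unfold vA, vV, vB in *; simpl; lia.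

Lemma jumpN (N : PAModel) psi X : forall s b,
  fN N psi X s b > fN N psi X s (pz N) ->
  exists a, PAle N a b /\ PAle N (pa N a (po N)) b /\ fN N psi X s (pa N a (po N)) > fN N psi X s a.
Proof.
  set (B := vB psi X). set (A := vA psi X).
  assert (HB : (amaxv psi < B)%nat /\ B <> X) by (unfold B; fresh_tac).
  assert (HA : (amaxv psi < A)%nat /\ A <> X /\ A <> B) by (unfold A, B; fresh_tac).
  destruct HB as [HB1 HB2]. destruct HA as [HA1 [HA2 HA3]].
  set (R := fun s : nat -> N => fN N psi X s (s B) > fN N psi X s (pz N) ->
    exists a, PAle N a (s B) /\ PAle N (pa N a (po N)) (s B) /\ fN N psi X s (pa N a (po N)) > fN N psi X s a).
  assert (HD : Def N R).
  { apply (Def_ext N (fun s => aeval (PA_L N) s (aplus (chi psi X (tvar B)) (ascale (-1) (chi psi X tzero))) > 0 ->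
       exists a, (aeval (PA_L N) (upd s A a) (adist (tmeet (tvar A) (tvar B)) (tvar A)) = 0 /\
                 aeval (PA_L N) (upd s A a) (adist (tmeet (tadd (tvar A) tone) (tvar B)) (tadd (tvar A) tone)) = 0 /\
                 aeval (PA_L N) (upd s A a) (aplus (chi psi X (tadd (tvar A) tone)) (ascale (-1) (chi psi X (tvar A)))) > 0))).
    - intros s. unfold R. rewrite ev_plus, ev_scale.
      rewrite !chiN by (simpl; lia). simpl teval.
      assert (E : forall a,
         (aeval (PA_L N) (upd s A a) (adist (tmeet (tvar A) (tvar B)) (tvar A)) = 0 <-> PAle N a (s B)) /\
         (aeval (PA_L N) (upd s A a) (adist (tmeet (tadd (tvar A) tone) (tvar B)) (tadd (tvar A) tone)) = 0 <->
            PAle N (pa N a (po N)) (s B)) /\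
         (aeval (PA_L N) (upd s A a) (aplus (chi psi X (tadd (tvar A) tone)) (ascale (-1) (chi psi X (tvar A)))) > 0 <->
            fN N psi X s (pa N a (po N)) > fN N psi X s a)).
      { intros a. rewrite !ev_dist. simpl teval. rewrite upd_eq, (upd_neq s A a B) by lia.
        rewrite !dist_PA. unfold discrete_d. split; [|split].
        - destruct (excluded_middle_informative _) as [H|H]; split; intros H'; try lra.
          apply le_of_min; auto. exfalso; apply H; apply min_of_le; auto.
        - destruct (excluded_middle_informative _) as [H|H]; split; intros H'; try lra.
          apply le_of_min; auto. exfalso; apply H; apply min_of_le; auto.
        - rewrite ev_plus, ev_scale, !chiN by (simpl; lia). simpl teval. rewrite upd_eq.
          rewrite !fN_fresh by lia. split; intros; lra. }
      split; intros H Hgt; (destruct H as [a Ha]; [lra|]); exists a; specialize (E a); tauto.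
    - apply Def_imp. apply (Def_g N _ (fun r => r > 0)).
      apply (Def_ex N A (fun s => aeval (PA_L N) s (adist (tmeet (tvar A) (tvar B)) (tvar A)) = 0 /\
                 aeval (PA_L N) s (adist (tmeet (tadd (tvar A) tone) (tvar B)) (tadd (tvar A) tone)) = 0 /\
                 aeval (PA_L N) s (aplus (chi psi X (tadd (tvar A) tone)) (ascale (-1) (chi psi X (tvar A)))) > 0)).
      apply Def_and. apply Def_val. apply Def_and. apply Def_val. apply (Def_g N _ (fun r => r > 0)). }
  intros s b. 
  assert (EF : forall y v, fN N psi X (upd s B y) v = fN N psi X s v) by (intros; apply fN_fresh; lia).
  assert (HR : forall x, R (upd s B x)).
  { apply PAind_def; auto.
    - unfold R. rewrite upd_eq. lra.
    - intros x IH. unfold R in *. rewrite upd_eq in *. setoid_rewrite EF in IH. setoid_rewrite EF.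
      intros Hgt. destruct (Rlt_dec (fN N psi X s x) (fN N psi X s (pa N x (po N)))) as [Hl|Hl].
      + exists x. split. exists (po N); auto. split. apply le_refl. lra.
      + destruct IH as [a [[z Hz] [[w Hw] Hf]]]. lra.
        exists a. split. exists (pa N z (po N)). rewrite PA4, Hz; auto.
        split. exists (pa N w (po N)). rewrite PA4, Hw; auto. auto. }
  specialize (HR b). unfold R in HR. rewrite upd_eq in HR. setoid_rewrite EF in HR. auto.
Qed.

Lemma N_body psi X : exists C, 0 < C /\ forall (N : PAModel) s, aeval (PA_L N) s (body psi X C) <= 0.
Proof.
  destruct (gap_exists (vals psi)) as [g [Hg Hgap]].
  pose proof (bnd_nonneg psi) as Hbn.
  exists (2 * bnd psi / g + 1). split.
  { assert (0 <= 2 * bnd psi / g) by (apply Rmult_le_pos; [lra|left; apply Rinv_0_lt_compat; auto]). lra. }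
  intros N s.
  set (B := vB psi X). set (V := vV psi X).
  assert (HB1 : (amaxv psi < B)%nat) by (unfold B; fresh_tac).
  assert (HB2 : B <> X) by (unfold B; fresh_tac).
  assert (HV1 : (amaxv psi < V)%nat) by (unfold V; fresh_tac).
  assert (HV2 : V <> X) by (unfold V; fresh_tac).
  assert (HV3 : V <> B) by (unfold V, B; fresh_tac).
  set (C := 2 * bnd psi / g + 1).
  assert (HC : C * g = 2 * bnd psi + g) by (unfold C; field; lra).
  assert (HC0 : 0 < C).
  { assert (0 <= 2 * bnd psi / g) by (apply Rmult_le_pos; [lra|left; apply Rinv_0_lt_compat; auto]). unfold C; lra. }
  set (b := s B).
  set (f := fN N psi X s).
  set (J := aeval (PA_L N) s (asup V (incr psi X))).
  assert (Hel : forall v, f (PAmin N (pa N (PAmin N v b) (po N)) b) - f (PAmin N v b) <= J).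
  { intros v. unfold J. eapply Rle_trans; [|apply (sup_ge _ (good_PA N) s V _ v)].
    unfold incr. rewrite ev_plus, ev_scale, !chiN by (unfold tA', tA; simpl; fold V B; lia).
    unfold tA', tA. simpl teval. fold V B. rewrite !upd_eq. rewrite !upd_neq by lia.
    rewrite !fN_fresh by lia. fold b. unfold f. lra. }
  unfold body. rewrite !ev_plus, !ev_scale, !chiN by (simpl; fold B; lia). fold V J.
  simpl teval. fold B b. fold f.
  assert (Hb : forall x, Rabs (f x) <= bnd psi) by (intros; apply aeval_bnd, good_PA).
  assert (Hin : forall x, In (f x) (vals psi)) by (intros; apply vals_in).
  destruct (Rlt_dec (f (pz N)) (f b)) as [Hlt|Hle].
  - destruct (jumpN N psi X s b Hlt) as [a [H1 [H2 H3]]].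
    specialize (Hel a). rewrite (min_of_le N a b H1), (min_of_le N _ b H2) in Hel.
    assert (g <= f (pa N a (po N)) - f a) by (apply Hgap; auto; fold f; lra).
    assert (C * g <= C * J) by (apply Rmult_le_compat_l; lra).
    pose proof (Hb b) as E1. pose proof (Hb (pz N)) as E2. apply abs_le_iff in E1, E2. lra.
  - specialize (Hel b). rewrite (min_of_le N b b (le_refl N b)), (min_of_nle N _ b (not_le_succ N b)) in Hel.
    assert (0 <= C * J) by (apply Rmult_le_pos; lra). lra.
Qed.

Lemma ev_sup S s m q : aeval S s (asup m q) = real (Lub_Rbar (fun r => exists x : S, r = aeval S (upd s m x) q)).
Proof. reflexivity. Qed.

Lemma dM_nonneg (M : LStructure) x y : 0 <= Defs.dist M x y.
Proof. destruct (good_M M) as [H _]. apply H. Qed.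

Lemma dM_eq0 (M : LStructure) x y : Defs.dist M x y <= 0 -> x = y.
Proof. intros H. apply d_sep. pose proof (dM_nonneg M x y). lra. Qed.

Lemma discrete_cases (N : PAModel) x y : (x = y /\ discrete_d N x y = 0) \/ (x <> y /\ discrete_d N x y = 1).
Proof. unfold discrete_d. destruct (excluded_middle_informative _); auto. Qed.

Definition env3 {A} (a b c : A) : nat -> A := fun n => match n with O => a | 1%nat => b | _ => c end.

Lemma F2M (M : LStructure) (HM : models_AA M) u x : Lmeet M (Lmeet M u x) x = Lmeet M u x.
Proof.
  set (q := adist (tmeet (tmeet (tvar 0) (tvar 1)) (tvar 1)) (tmeet (tvar 0) (tvar 1))).
  assert (HN : forall (N : PAModel) e, aeval (PA_L N) e q <= 0).
  { intros N e. unfold q. rewrite ev_dist, dist_PA. simpl teval. rewrite F2N.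
    destruct (discrete_cases N (PAmin N (e 0%nat) (e 1%nat)) (PAmin N (e 0%nat) (e 1%nat))) as [[_ E]|[E _]]; [lra|congruence]. }
  apply dM_eq0. apply (AA_transfer M HM q HN (env3 u x x)).
Qed.

Lemma F3M (M : LStructure) (HM : models_AA M) u x : Lmeet M (Lmeet M u x) u = Lmeet M u x.
Proof.
  set (q := adist (tmeet (tmeet (tvar 0) (tvar 1)) (tvar 0)) (tmeet (tvar 0) (tvar 1))).
  assert (HN : forall (N : PAModel) e, aeval (PA_L N) e q <= 0).
  { intros N e. unfold q. rewrite ev_dist, dist_PA. simpl teval. rewrite F3N.
    destruct (discrete_cases N (PAmin N (e 0%nat) (e 1%nat)) (PAmin N (e 0%nat) (e 1%nat))) as [[_ E]|[E _]]; [lra|congruence]. }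
  apply dM_eq0. apply (AA_transfer M HM q HN (env3 u x x)).
Qed.

Lemma F6M (M : LStructure) (HM : models_AA M) x : Lmeet M (Lzero M) x = Lzero M.
Proof.
  set (q := adist (tmeet tzero (tvar 0)) tzero).
  assert (HN : forall (N : PAModel) e, aeval (PA_L N) e q <= 0).
  { intros N e. unfold q. rewrite ev_dist, dist_PA. simpl teval. rewrite F6N.
    destruct (discrete_cases N (pz N) (pz N)) as [[_ E]|[E _]]; [lra|congruence]. }
  apply dM_eq0. apply (AA_transfer M HM q HN (env3 x x x)).
Qed.

Lemma F4M (M : LStructure) (HM : models_AA M) z x y :
  Lmeet M z x = z -> Lmeet M x y = x -> Lmeet M z y = z.
Proof.
  intros H1 H2.
  set (q := aplus (adist (tmeet (tvar 0) (tvar 2)) (tvar 0))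
              (aplus (ascale (-1) (adist (tmeet (tvar 0) (tvar 1)) (tvar 0)))
                     (ascale (-1) (adist (tmeet (tvar 1) (tvar 2)) (tvar 1))))).
  assert (HN : forall (N : PAModel) e, aeval (PA_L N) e q <= 0).
  { intros N e. unfold q. rewrite !ev_plus, !ev_scale, !ev_dist, !dist_PA. simpl teval.
    set (a := e 0%nat). set (b := e 1%nat). set (c := e 2%nat).
    destruct (discrete_cases N (PAmin N a b) a) as [[E1 F1]|[E1 F1]];
    destruct (discrete_cases N (PAmin N b c) b) as [[E2 F2]|[E2 F2]];
    destruct (discrete_cases N (PAmin N a c) a) as [[E3 F3]|[E3 F3]]; try lra.
    exfalso. apply E3. eapply F4N; eauto. }
  apply dM_eq0. pose proof (AA_transfer M HM q HN (env3 z x y)) as H.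
  unfold q in H. rewrite !ev_plus, !ev_scale, !ev_dist in H. simpl teval in H.
  rewrite H1, H2, !d_refl in H. lra.
Qed.


Definition Phi (M : LStructure) (D : M -> Prop) (y : M) : R := dist_set M y D.



Lemma Phi_bounds (M : LStructure) (D : M -> Prop) (d0 : M) (Hd0 : D d0) y :
  0 <= Phi M D y /\ Phi M D y <= 1.
Proof.
  unfold Phi, dist_set.
  destruct (glb_le (fun r => exists z, D z /\ r = Defs.dist M y z) (Defs.dist M y d0) 0) as [H1 H2].
  - intros r [z [_ ->]]. apply dM_nonneg.
  - eauto.
  - split; auto. pose proof (d_diam M y d0). lra.
Qed.

Lemma Phi_zero (M : LStructure) (D : M -> Prop) y : D y -> Phi M D y = 0.
Proof.
  intros Hy. unfold Phi, dist_set.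
  destruct (glb_le (fun r => exists z, D z /\ r = Defs.dist M y z) (Defs.dist M y y) 0) as [H1 H2].
  - intros r [z [_ ->]]. apply dM_nonneg.
  - eauto.
  - rewrite d_refl in H2. lra.
Qed.

Lemma Phi_le_d (M : LStructure) (D : M -> Prop) y z : D z -> Phi M D y <= Defs.dist M y z.
Proof.
  intros Hz. unfold Phi, dist_set.
  destruct (glb_le (fun r => exists z, D z /\ r = Defs.dist M y z) (Defs.dist M y z) 0) as [H1 H2]; auto.
  - intros r [w [_ ->]]. apply dM_nonneg.
  - eauto.
Qed.

Lemma Phi_lip (M : LStructure) (D : M -> Prop) (d0 : M) (Hd0 : D d0) y y' :
  Phi M D y <= Phi M D y' + Defs.dist M y y'.
Proof.
  assert (Phi M D y - Defs.dist M y y' <= Phi M D y'); [|lra].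
  unfold Phi at 2, dist_set.
  apply (glb_le (fun r => exists z, D z /\ r = Defs.dist M y' z) (Defs.dist M y' d0)); eauto.
  intros r [z [Hz ->]]. pose proof (Phi_le_d M D y z Hz). pose proof (d_tri M y y' z). lra.
Qed.

Definition Gf (M : LStructure) (D : M -> Prop) (x : M) : R :=
  real (Lub_Rbar (fun r => exists u : M, r = Phi M D (Lmeet M u x))).

Lemma G_ge (M : LStructure) (D : M -> Prop) (d0 : M) (Hd0 : D d0) u x : Phi M D (Lmeet M u x) <= Gf M D x.
Proof.
  unfold Gf. apply (lub_ge _ _ 1); eauto. intros r [v ->]. apply (Phi_bounds M D d0 Hd0).
Qed.

Lemma G_le (M : LStructure) (D : M -> Prop) x c : (forall u, Phi M D (Lmeet M u x) <= c) -> Gf M D x <= c.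
Proof.
  intros H. unfold Gf. apply (lub_ge _ (Phi M D (Lmeet M x x)) c); eauto. intros r [v ->]; auto.
Qed.

Lemma G_lip (M : LStructure) (D : M -> Prop) (d0 : M) (Hd0 : D d0) x y : Gf M D x <= Gf M D y + Defs.dist M x y.
Proof.
  apply G_le. intros u. pose proof (Phi_lip M D d0 Hd0 (Lmeet M u x) (Lmeet M u y)).
  pose proof (G_ge M D d0 Hd0 u y). pose proof (lip_meet M u u x y) as Hl. rewrite d_refl in Hl.
  rewrite Rmax_right in Hl by apply dM_nonneg. lra.
Qed.

Definition vX (p : aformula) : nat := S (amaxv p).
Definition vU (p : aformula) : nat := S (S (amaxv p)).
Definition psiF (p : aformula) : aformula :=
  asup (vU p) (Sub p 0 (tmeet (tvar (vU p)) (tvar (vX p))) (2 * bnd p + 1)).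

Lemma psi_eval (M : LStructure) (D : M -> Prop) (d0 : M) (Hd0 : D d0) p (s0 : nat -> M)
  (HD : forall x, dist_set M x D = aeval M (upd s0 0 x) p) e x :
  (forall n, (n <= amaxv p)%nat -> n <> 0%nat -> e n = s0 n) ->
  aeval M (upd e (vX p) x) (psiF p) = Gf M D x.
Proof.
  intros He. unfold psiF. rewrite ev_sup. unfold Gf. f_equal. apply Lub_Rbar_eqset.
  assert (Hp : forall u y, aeval M (upd (upd (upd e (vX p) x) (vU p) u) 0 y) p = Phi M D y).
  { intros u y. unfold Phi. rewrite HD. apply aeval_agree. intros n Hn.
    unfold upd. destruct (Nat.eqb_spec n 0); auto.
    destruct (Nat.eqb_spec n (vU p)). unfold vU in *; lia.
    destruct (Nat.eqb_spec n (vX p)). unfold vX in *; lia. apply He; auto. }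
  assert (Hs : forall u, aeval M (upd (upd e (vX p) x) (vU p) u) (Sub p 0 (tmeet (tvar (vU p)) (tvar (vX p))) (2 * bnd p + 1))
                  = Phi M D (Lmeet M u x)).
  { intros u. rewrite Sub_eval; [| apply good_M | |].
    - rewrite Hp. simpl teval. rewrite upd_eq, upd_neq, upd_eq by (unfold vU, vX; lia). auto.
    - simpl. unfold vU, vX. lia.
    - intros y y'. rewrite !Hp. pose proof (Phi_lip M D d0 Hd0 y y'). pose proof (dM_nonneg M y y').
      pose proof (bnd_nonneg p).
      assert (Defs.dist M y y' <= (2 * bnd p + 1) * Defs.dist M y y').
      { assert (0 <= 2 * bnd p * Defs.dist M y y') by (apply Rmult_le_pos; lra). lra. }
      lra. }
  intros r. split; intros [u Hu]; exists u; rewrite Hu; auto.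
Qed.

Theorem mainTheorem6 (M : LStructure) (HM : models_AA M)
  (I : M -> Prop) (HI : proper_cut M I)
  (D : M -> Prop) (HD : formula_definable M D)
  (HID : forall x, I x -> D x) :
  forall eps : R, 0 < eps ->
    exists a : M, ~ I a /\
      (forall u : M, Lle M u a -> eps_nbhd M D eps u).
Proof.
  intros eps Heps.
  destruct HI as [[[x0 Hx0] [Hdown Hsucc]] [c0 Hc0]].
  destruct HD as [_ [p [s0 Hp]]].
  assert (Hd0 : D x0) by auto.
  set (psi := psiF p). set (X := vX p).
  destruct (N_body psi X) as [C [HC HN]].
  assert (Hbody := AA_transfer M HM (body psi X C) HN).
  set (G := Gf M D).
  assert (I0 : I (Lzero M)) by (apply (Hdown _ x0); auto; unfold Lle; apply F6M; auto).
  assert (GI : forall x, I x -> G x = 0).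
  { intros x Hx. apply Rle_antisym.
    - apply G_le. intros u. rewrite Phi_zero; [lra|]. apply HID. apply (Hdown _ x); auto. unfold Lle. apply F2M; auto.
    - eapply Rle_trans; [|apply (G_ge M D x0 Hd0 x x)]. apply (Phi_bounds M D x0 Hd0). }
  assert (Gmono : forall x y, Lle M x y -> G x <= G y).
  { intros x y Hxy. apply G_le. intros u.
    assert (E : Lmeet M (Lmeet M u x) y = Lmeet M u x) by (apply (F4M M HM _ x); auto; apply F2M; auto).
    rewrite <- E. apply G_ge with x0; auto. }
  assert (Gb1 : forall x, G x <= 1) by (intros; apply G_le; intros; apply (Phi_bounds M D x0 Hd0)).
  assert (Gb0 : forall x, 0 <= G x).
  { intros x; eapply Rle_trans; [|apply (G_ge M D x0 Hd0 x x)]; apply (Phi_bounds M D x0 Hd0). }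
  apply NNPP. intros Hcon.
  assert (Gout : forall a, ~ I a -> eps <= G a).
  { intros a Ha. destruct (not_all_ex_not _ _ (fun H => Hcon (ex_intro _ a (conj Ha H)))) as [u Hu].
    apply imply_to_and in Hu. destruct Hu as [Hua Hu]. unfold eps_nbhd in Hu. apply Rnot_lt_le in Hu.
    unfold Lle in Hua. rewrite <- Hua in Hu. eapply Rle_trans; [apply Hu|]. apply G_ge with x0; auto. }
  set (delta := eps / (2 * C)).
  assert (Hdelta : 0 < delta) by (unfold delta; apply Rdiv_lt_0_compat; lra).
  assert (HCd : C * delta = eps / 2) by (unfold delta; field; lra).
  set (B := vB psi X). set (V := vV psi X).
  assert (HpB : (amaxv p < B)%nat) by (unfold B, vB, psi, psiF, Sub, vU, vX; cbn [amaxv tmaxv]; lia).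
  assert (HBX : B <> X) by (unfold B, vB, X; lia).
  assert (HVB : V <> B) by (unfold V, vV; lia).
  assert (HVX : V <> X) by (unfold V, vV, B, vB, X; lia).
  assert (HL2 : 1 <= L2 psi) by (unfold L2; pose proof (bnd_nonneg psi); lra).
  assert (chiM : forall e t, (forall n, (n <= amaxv p)%nat -> n <> 0%nat -> e n = s0 n) -> ~ tfree X t ->
             aeval M e (chi psi X t) = G (teval M e t)).
  { intros e t He Ht. unfold chi. rewrite Sub_eval; [| apply good_M | auto |].
    - unfold psi, X. rewrite (psi_eval M D x0 Hd0 p s0 Hp); auto.
    - intros x y. unfold psi, X. rewrite !(psi_eval M D x0 Hd0 p s0 Hp); auto.
      pose proof (G_lip M D x0 Hd0 x y). pose proof (dM_nonneg M x y).
      assert (Defs.dist M x y <= L2 psi * Defs.dist M x y).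
      { assert (0 <= (L2 psi - 1) * Defs.dist M x y) by (apply Rmult_le_pos; lra). lra. }
      fold psi. lra. }
  assert (Step : forall b, ~ I b -> exists a, ~ I a /\ G a <= G b - delta).
  { intros b Hb.
    set (e := upd s0 B b).
    assert (He : forall n, (n <= amaxv p)%nat -> n <> 0%nat -> e n = s0 n).
    { intros n Hn _. unfold e. apply upd_neq. lia. }
    assert (He' : forall v n, (n <= amaxv p)%nat -> n <> 0%nat -> upd e V v n = s0 n).
    { intros v n Hn _. unfold e. rewrite !upd_neq; auto; unfold V, vV; lia. }
    set (J := aeval M e (asup V (incr psi X))).
    assert (Hb0 := Hbody e). unfold body in Hb0. rewrite !ev_plus, !ev_scale in Hb0.
    rewrite !chiM in Hb0 by (auto; simpl; auto). simpl teval in Hb0. fold V J in Hb0.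
    unfold e in Hb0 at 1. rewrite upd_eq in Hb0.
    rewrite (GI _ I0) in Hb0. pose proof (Gout b Hb).
    assert (HJ : delta < J).
    { apply Rnot_le_lt. intros HJ. assert (C * J <= C * delta) by (apply Rmult_le_compat_l; lra). lra. }
    assert (Hex : exists v, delta < G (Lmeet M (Ladd M (Lmeet M v b) (Lone M)) b) - G (Lmeet M v b)).
    { apply NNPP. intros Hn. assert (J <= delta); [|lra].
      unfold J. apply sup_le. apply good_M. intros v.
      apply Rnot_lt_le. intros Hv. apply Hn. exists v.
      unfold incr in Hv. rewrite ev_plus, ev_scale in Hv. rewrite !chiM in Hv by (auto; unfold tA', tA; simpl; fold B V; lia).
      unfold tA', tA in Hv. simpl teval in Hv. fold B V in Hv. rewrite !upd_eq in Hv.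
      rewrite !(upd_neq e V v B) in Hv by auto. unfold e in Hv. rewrite upd_eq in Hv. lra. }
    destruct Hex as [v Hv].
    set (a := Lmeet M v b) in *. set (a' := Lmeet M (Ladd M a (Lone M)) b) in *.
    exists a. split.
    - intros Ha. assert (Ia' : I a').
      { apply (Hdown _ (Ladd M a (Lone M))); auto. unfold Lle, a'. apply F3M; auto. }
      rewrite (GI _ Ha), (GI _ Ia') in Hv. lra.
    - assert (G a' <= G b) by (apply Gmono; unfold Lle, a'; apply F2M; auto). lra. }
  assert (Iter : forall n, exists a, ~ I a /\ G a <= G c0 - INR n * delta).
  { induction n as [|n [a [Ha1 Ha2]]].
    - exists c0. split; auto. simpl. lra.
    - destruct (Step a Ha1) as [a' [Ha'1 Ha'2]]. exists a'. split; auto. rewrite S_INR. lra. }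
  destruct (archimed_cor1 delta Hdelta) as [n [Hn1 Hn2]].
  assert (Hn : 1 < INR n * delta).
  { assert (0 < INR n) by (apply lt_0_INR; lia).
    apply (Rmult_lt_compat_l (INR n)) in Hn1; auto. rewrite Rinv_r in Hn1 by lra. lra. }
  destruct (Iter n) as [a [Ha1 Ha2]].
  pose proof (Gout a Ha1). pose proof (Gb1 c0). lra.
Qed.
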